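(* Let $\Lambda$ be a set and let $(\mathcal{X},\preceq)$ be a poset in which every nonempty chain has an infimum. If $(\mathcal{X},\preceq)$ is a complete partially ordered set, then the $\Lambda$-system algebra of monotone systems over $\mathcal{X}$ is composition-order invariant; and if $(\mathcal{X},\preceq)$ is an $\omega$-chain complete partially ordered set, then the $\Lambda$-system algebra of continuous systems over $\mathcal{X}$ is composition-order invariant.
   Context: A CPO is a poset in which every chain (including the empty one) has a supremum; an $\omega$-CPO is a poset with least element in which every $\omega$-chain (sequence $(x_n)_{n\in\mathbb{N}}$ with $x_i\preceq x_j$ for $i\le j$) has a supremum. $\mathcal{X}^{\mathcal{I}}$ (functions $\mathcal{I}\to\mathcal{X}$) is ordered componentwise. A function is $\omega$-continuous if it maps suprema of $\omega$-chains to suprema of the image. The $\Lambda$-system algebra of monotone (resp. continuous) systems over $\mathcal{X}$ has as systems all monotone (resp. $\omega$-continuous) functions $s:\mathcal{X}^{\mathcal{I}}\to\mathcal{X}^{\mathcal{O}}$ for finite disjoint $\mathcal{I},\mathcal{O}\subseteq\Lambda$, with $\lambda(s)=\mathcal{I}\cup\mathcal{O}$; $\Gamma(s)=\{\{i,o\}\mid i\in\mathcal{I},o\in\mathcal{O}\}$; parallel composition $(s_1\parallel s_2)(\mathbf{x})(o_j)=s_j(\mathbf{x}|_{\mathcal{I}_j})(o_j)$ for $s_j:\mathcal{X}^{\mathcal{I}_j}\to\mathcal{X}^{\mathcal{O}_j}$ with $\mathcal{I}_1,\mathcal{I}_2,\mathcal{O}_1,\mathcal{O}_2$ pairwise disjoint;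 and interface connection $\gamma_{i,o}(s)(\mathbf{x})=s(\mathbf{x}\cup\{(i,x^* )\})|_{\mathcal{O}\setminus\{o\}}$ for $\mathbf{x}\in\mathcal{X}^{\mathcal{I}\setminus\{i\}}$, where $x^*$ is the least $x_i\in\mathcal{X}$ with $s(\mathbf{x}\cup\{(i,x_i)\})(o)=x_i$. Composition-order invariance means: (i) for all $s$, $\{i,o\}\in\Gamma(s)$, $\{i',o'\}\in\Gamma(\gamma_{i,o}(s))$ we have $\{i',o'\}\in\Gamma(s)$, $\{i,o\}\in\Gamma(\gamma_{i',o'}(s))$ and $\gamma_{i',o'}(\gamma_{i,o}(s))=\gamma_{i,o}(\gamma_{i',o'}(s))$; (ii) $\parallel$ is associative and commutative; (iii) $\gamma_{i,o}(s_1)\parallel s_2=\gamma_{i,o}(s_1\parallel s_2)$ whenever $\lambda(s_1)\cap\lambda(s_2)=\emptyset$ and $\{i,o\}\in\Gamma(s_1)$. *)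

(* Defs.v *)
From mathcomp Require Import all_boot finmap.
From Stdlib Require Import ClassicalEpsilon.

Set Implicit Arguments.
Unset Strict Implicit.
Unset Printing Implicit Defensive.

Local Open Scope fset_scope.

Section Order.
Variables (X : Type) (le : X -> X -> Prop).

Definition is_poset : Prop :=
  (forall x, le x x) /\
  (forall x y, le x y -> le y x -> x = y) /\
  (forall x y z, le x y -> le y z -> le x z).

Definition is_chain (C : X -> Prop) : Prop :=
  forall x y, C x -> C y -> le x y \/ le y x.

Definition is_sup (C : X -> Prop) (s : X) : Prop :=
  (forall x, C x -> le x s) /\ (forall u, (forall x, C x -> le x u) -> le s u).

Definition is_inf (C : X -> Prop) (m : X) : Prop :=
  (forall x, C x -> le m x) /\ (forall u, (forall x, C x -> le u x) -> le u m).

Definition nonempty_chain_inf : Prop :=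
  forall C, is_chain C -> (exists x, C x) -> exists m, is_inf C m.

(* CPO: every chain (including the empty one) has a supremum *)
Definition is_CPO : Prop :=
  forall C, is_chain C -> exists s, is_sup C s.

Definition is_omega_chain (c : nat -> X) : Prop :=
  forall i j : nat, (i <= j)%N -> le (c i) (c j).

Definition is_omegaCPO : Prop :=
  (exists b, forall x, le b x) /\
  (forall c, is_omega_chain c -> exists s, is_sup (fun x => exists n, x = c n) s).

Definition is_lfp (f : X -> X) (x : X) : Prop :=
  f x = x /\ forall y, f y = y -> le x y.

End Order.

Definition lef (A : Type) (X : Type) (le : X -> X -> Prop) (f g : A -> X) : Prop :=
  forall a, le (f a) (g a).

Definition monotone_fun (A B X : Type) (le : X -> X -> Prop) (F : (A -> X) -> (B -> X)) :=
  forall x y, lef le x y -> lef le (F x) (F y).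

Definition omega_continuous_fun (A B X : Type) (le : X -> X -> Prop)
    (F : (A -> X) -> (B -> X)) :=
  forall (c : nat -> A -> X), is_omega_chain (lef le) c ->
  forall s, is_sup (lef le) (fun x => exists n, x = c n) s ->
    is_sup (lef le) (fun y => exists n, y = F (c n)) (F s).

(* X^I is represented as functions on the finite subtype of I.         *)
Record system (L : choiceType) (X : Type) := Sys {
  sI : {fset L};
  sO : {fset L};
  sf : (sI -> X) -> (sO -> X) }.
Arguments sI {L X} s.
Arguments sO {L X} s.
Arguments sf {L X} s _ _.

Section Systems.
Variables (L : choiceType) (X : Type) (le : X -> X -> Prop).

Lemma memD1 (A : {fset L}) (b a : L) : a \in A `\ b -> a \in A.
Proof. by rewrite in_fsetD1 => /andP[]. Qed.

Lemma memUl (A B : {fset L}) (a : L) : a \in A -> a \in A `|` B.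
Proof. by rewrite in_fsetU => ->. Qed.

Lemma memUr (A B : {fset L}) (a : L) : a \in B -> a \in A `|` B.
Proof. by rewrite in_fsetU => ->; rewrite orbT. Qed.

Lemma memU_notl (A B : {fset L}) (a : L) :
  a \in A `|` B -> (a \in A) = false -> a \in B.
Proof. by rewrite in_fsetU => /orP[->|]. Qed.

Definition lam (s : system L X) : {fset L} := sI s `|` sO s.

Definition inGamma (s : system L X) (i o : L) : Prop := i \in sI s /\ o \in sO s.

Definition monotone_sys (s : system L X) : Prop :=
  [disjoint sI s & sO s] /\ monotone_fun le (sf s).

Definition continuous_sys (s : system L X) : Prop :=
  [disjoint sI s & sO s] /\ omega_continuous_fun le (sf s).

(* x u {(i, v)} for x in X^(I \ {i}) *)
Definition ext (I : {fset L}) (i : L) (x : (I `\ i) -> X) (v : X) : I -> X :=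
  fun j => match (insub (fsval j) : option (I `\ i)) with
           | Some k => x k
           | None => v
           end.

Definition restrD1 (O : {fset L}) (o : L) (y : O -> X) : (O `\ o) -> X :=
  fun k => y [` memD1 (fsvalP k)].

(* the least fixed point of f if it exists; the junk value x0 otherwise *)
Definition lfp_or (x0 : X) (f : X -> X) : X :=
  match excluded_middle_informative (exists x, is_lfp le f x) with
  | left h => proj1_sig (constructive_indefinite_description _ h)
  | right _ => x0
  end.

(* interface connection gamma_{i,o}; x0 is only used outside the
   situations where the least fixed point exists *)
Definition gamma (x0 : X) (s : system L X) (i o : L) : system L X :=
  @Sys L X (sI s `\ i) (sO s `\ o) (fun x =>
    let xstar :=
      match (insub o : option (sO s)) with
      | Some o' => lfp_or x0 (fun v => sf s (ext x v) o')
      | None => x0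
      end in
    restrD1 (sf s (ext x xstar))).

Definition resl (A B : {fset L}) (x : (A `|` B) -> X) : A -> X :=
  fun j => x [` memUl B (fsvalP j)].

Definition resr (A B : {fset L}) (x : (A `|` B) -> X) : B -> X :=
  fun j => x [` memUr A (fsvalP j)].

(* case split of an element of A u B (left part takes priority) *)
Definition splitU (A B : {fset L}) (k : A `|` B) : A + B :=
  match (fsval k \in A) as b return (fsval k \in A) = b -> A + B with
  | true => fun h => inl [` h]
  | false => fun h => inr [` memU_notl (fsvalP k) h]
  end erefl.

Definition par (s1 s2 : system L X) : system L X :=
  @Sys L X (sI s1 `|` sI s2) (sO s1 `|` sO s2) (fun x k =>
    match splitU k with
    | inl k1 => sf s1 (resl x) k1
    | inr k2 => sf s2 (resr x) k2
    end).

Definition composition_order_invariant (x0 : X) (P : system L X -> Prop) : Prop :=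
  (forall s, P s -> forall i o i' o',
     inGamma s i o -> inGamma (gamma x0 s i o) i' o' ->
     [/\ inGamma s i' o', inGamma (gamma x0 s i' o') i o &
         gamma x0 (gamma x0 s i o) i' o' = gamma x0 (gamma x0 s i' o') i o])
  /\
  (forall s1 s2, P s1 -> P s2 -> [disjoint lam s1 & lam s2] ->
     par s1 s2 = par s2 s1)
  /\
  (forall s1 s2 s3, P s1 -> P s2 -> P s3 ->
     [disjoint lam s1 & lam s2] -> [disjoint lam s1 & lam s3] ->
     [disjoint lam s2 & lam s3] ->
     par (par s1 s2) s3 = par s1 (par s2 s3))
  /\
  (forall s1 s2 i o, P s1 -> P s2 -> [disjoint lam s1 & lam s2] ->
     inGamma s1 i o ->
     par (gamma x0 s1 i o) s2 = gamma x0 (par s1 s2) i o).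

End Systems.

(* Main.v *)
Require Import Defs.
From mathcomp Require Import all_boot finmap.
From Stdlib Require Import Classical FunctionalExtensionality ClassicalEpsilon.

Set Implicit Arguments.
Unset Strict Implicit.
Unset Printing Implicit Defensive.

Section OrderGen.
Variables (Y : Type) (leY : Y -> Y -> Prop).
Hypothesis poY : is_poset leY.

Let refl : forall x, leY x x := proj1 poY.
Let anti : forall x y, leY x y -> leY y x -> x = y := proj1 (proj2 poY).
Let trans : forall x y z, leY x y -> leY y z -> leY x z := proj2 (proj2 poY).

Definition lpp (F : Y -> Y) (a : Y) :=
  F a = a /\ forall y, leY (F y) y -> leY a y.

Lemma lfp_or_lpp x0 F a : lpp F a -> lfp_or leY x0 F = a.
Proof.
move=> [Fa Hl].
have Hlfp : is_lfp leY F a.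
  split => // y Fy; apply: Hl; rewrite Fy; apply: refl.
rewrite /lfp_or; case: excluded_middle_informative => [h|[]]; last by exists a.
case: (constructive_indefinite_description _ h) => z [Fz Hz] /=.
apply: anti; [exact: Hz | exact: Hlfp.2].
Qed.

Section Tower.
Variable F : Y -> Y.
Hypothesis Fmono : forall x y, leY x y -> leY (F x) (F y).

Definition admissible (A : Y -> Prop) :=
  (forall C, (forall x, C x -> A x) -> is_chain leY C ->
     forall s, is_sup leY C s -> A s) /\ (forall x, A x -> A (F x)).

Definition Mt x := forall A, admissible A -> A x.

Lemma Mt_adm : admissible Mt.
Proof.
split.
  move=> C CM Cc s Cs A HA; apply: HA.1 Cc _ Cs => x Cx; exact: CM.
move=> x Mx A HA; apply: HA.2; exact: Mx.
Qed.

Definition Dt x := leY x (F x) /\ forall y, leY (F y) y -> leY x y.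

Lemma Dt_adm : admissible Dt.
Proof.
split.
  move=> C CD Cc s [Sub Sl]; split.
    apply: Sl => x Cx; apply: trans (CD x Cx).1 _; apply: Fmono; exact: Sub.
  move=> y Fy; apply: Sl => x Cx; exact: (CD x Cx).2.
move=> x [h1 h2]; split; first exact: Fmono.
move=> y Fy; exact: (trans (Fmono (h2 _ Fy)) Fy).
Qed.

Lemma Mt_Dt x : Mt x -> Dt x.
Proof. move=> Mx; exact: Mx Dt_adm. Qed.

Definition extreme c := Mt c /\ forall x, Mt x -> leY x c -> x <> c -> leY (F x) c.

Lemma ext_Mc c : extreme c -> forall x, Mt x -> leY x c \/ leY (F c) x.
Proof.
move=> [Mc Ec] x Mx.
suff: Mt x /\ (leY x c \/ leY (F c) x) by case.
apply: (Mx (fun y => Mt y /\ (leY y c \/ leY (F c) y))); split.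
  move=> C CA Cc s Cs; split.
    apply: Mt_adm.1 Cc _ Cs => y Cy; exact: (CA y Cy).1.
  case: (classic (exists y, C y /\ ~ leY y c)) => [[y [Cy ny]]|hn].
    right; case: (CA y Cy).2 => // h; apply: trans h _; exact: Cs.1.
  left; apply: Cs.2 => y Cy; apply: NNPP => ny; apply: hn; by exists y.
move=> y [My hy]; split; first exact: Mt_adm.2.
case: hy => hy.
  case: (classic (y = c)) => [->|nyc]; first by right; apply: refl.
  left; exact: Ec.
right; apply: trans hy (Mt_Dt My).1.
Qed.

Lemma extreme_all c0 : Mt c0 -> extreme c0.
Proof.
move=> Mc0; apply: (Mc0 extreme); split.
  move=> C CE Cc s Cs; have Ms : Mt s.
    apply: Mt_adm.1 Cc _ Cs => y Cy; exact: (CE y Cy).1.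
  split => // x Mx xs nxs.
  case: (classic (exists d, C d /\ ~ leY d x)) => [[d [Cd ncx]]|hn].
    case: (ext_Mc (CE d Cd) Mx) => h.
      have nxc : x <> d by move=> e; apply: ncx; rewrite -e; apply: refl.
      apply: trans ((CE d Cd).2 x Mx h nxc) _; exact: Cs.1.
    exfalso; apply: ncx; apply: trans _ h; exact: (Mt_Dt (CE d Cd).1).1.
  exfalso; apply: nxs; apply: anti => //; apply: Cs.2 => d Cd.
  apply: NNPP => ncx; apply: hn; by exists d.
move=> c [Mc Ec]; split; first exact: Mt_adm.2.
move=> x Mx xF nxF.
case: (ext_Mc (conj Mc Ec) Mx) => h.
  case: (classic (x = c)) => [->|nxc]; first exact: refl.
  apply: trans (Ec x Mx h nxc) (Mt_Dt Mc).1.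
exfalso; apply: nxF; exact: anti.
Qed.

Lemma Mt_chain : is_chain leY Mt.
Proof.
move=> x y Mx My; case: (ext_Mc (extreme_all My) Mx) => h; [by left|right].
apply: trans _ h; exact: (Mt_Dt My).1.
Qed.

Lemma lpp_cpo : is_CPO leY -> exists a, lpp F a.
Proof.
move=> cpo; case: (cpo _ Mt_chain) => m ms.
have Mm : Mt m by apply: Mt_adm.1 Mt_chain _ ms.
have Fm : leY (F m) m by apply: ms.1; exact: Mt_adm.2.
exists m; split; first by apply: anti => //; exact: (Mt_Dt Mm).1.
exact: (Mt_Dt Mm).2.
Qed.

End Tower.

Lemma lpp_kleene F (b : Y) :
  (forall x y, leY x y -> leY (F x) (F y)) ->
  (forall y, leY b y) ->
  (forall c, is_omega_chain leY c -> exists s, is_sup leY (fun x => exists n, x = c n) s) ->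
  (forall c, is_omega_chain leY c -> forall s, is_sup leY (fun x => exists n, x = c n) s ->
      is_sup leY (fun y => exists n, y = F (c n)) (F s)) ->
  exists a, lpp F a.
Proof.
move=> Fmono bot sups cont.
pose c n := iter n F b.
have step : forall n, leY (c n) (c n.+1).
  elim=> [|n IH]; first exact: bot.
  rewrite /c /= -/(c n) -/(c n.+1); exact: Fmono.
have ch : is_omega_chain leY c.
  move=> i j /subnKC <-; elim: (j - i) => [|k IH]; first by rewrite addn0; apply: refl.
  rewrite addnS; apply: trans IH (step _).
case: (sups c ch) => s ss.
have Fs := cont c ch s ss.
have e1 : leY (F s) s.
  apply: Fs.2 => y [n ->]; apply: ss.1; by exists n.+1.
have e2 : leY s (F s).
  apply: ss.2 => y [n ->]; case: n => [|n]; first exact: bot.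
  apply: Fs.1; by exists n.
exists s; split; first exact: anti.
move=> y Fy; apply: ss.2 => z [n ->]; elim: n => [|n IH]; first exact: bot.
rewrite /c /= -/(c n); apply: trans _ Fy; exact: Fmono.
Qed.

End OrderGen.

Section Bekic.
Variables (X : Type) (le : X -> X -> Prop).
Hypothesis po : is_poset le.

Let refl : forall x, le x x := proj1 po.
Let anti : forall x y, le x y -> le y x -> x = y := proj1 (proj2 po).
Let trans : forall x y z, le x y -> le y z -> le x z := proj2 (proj2 po).

Definition mono2 (f : X -> X -> X) :=
  forall v v' w w', le v v' -> le w w' -> le (f v w) (f v' w').
Definition leP (p q : X * X) := le p.1 q.1 /\ le p.2 q.2.
Definition Fp (f g : X -> X -> X) (p : X * X) := (f p.1 p.2, g p.1 p.2).
Definition bekic_hyps f g :=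
  [/\ mono2 f, mono2 g, (forall v, exists a, lpp le (g v) a),
      (forall w, exists a, lpp le (fun v => f v w) a) &
      exists p, lpp leP (Fp f g) p].

Lemma bekic x0 f g : bekic_hyps f g ->
  let h v := lfp_or le x0 (g v) in
  let k w := lfp_or le x0 (fun v => f v w) in
  lfp_or le x0 (fun v => f v (h v)) = k (lfp_or le x0 (fun w => g (k w) w)) /\
  h (lfp_or le x0 (fun v => f v (h v))) = lfp_or le x0 (fun w => g (k w) w).
Proof.
case=> mf mg Hg Hf [[a b] [Fab least]] h k.
case: Fab => fab gab.
have hspec v : lpp le (g v) (h v).
  case: (Hg v) => a' ha'; by rewrite /h (lfp_or_lpp po x0 ha').
have kspec w : lpp le (fun v => f v w) (k w).
  case: (Hf w) => a' ha'; by rewrite /k (lfp_or_lpp po x0 ha').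
have ha : h a = b.
  apply: anti.
    apply: (hspec a).2; rewrite gab; exact: refl.
  have := least (a, h a); case.
    split => /=; last by rewrite (hspec a).1; apply: refl.
    apply: (@trans _ (f a b) _); last by rewrite fab; apply: refl.
    apply: mf; first exact: refl.
    apply: (hspec a).2; rewrite gab; exact: refl.
  by [].
have kb : k b = a.
  apply: anti.
    apply: (kspec b).2; rewrite /= fab; exact: refl.
  have := least (k b, b); case.
    split => /=; first by rewrite (kspec b).1; apply: refl.
    apply: (@trans _ (g a b) _); last by rewrite gab; apply: refl.
    apply: mg; last exact: refl.
    apply: (kspec b).2; rewrite /= fab; exact: refl.
  by [].
have G1 : lpp le (fun v => f v (h v)) a.
  split; first by rewrite ha.
  move=> v Gv; have := least (v, h v); case => //.
  split => //=; rewrite (hspec v).1; exact: refl.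
have G2 : lpp le (fun w => g (k w) w) b.
  split; first by rewrite kb.
  move=> w Gw; have := least (k w, w); case => //.
  split => //=; rewrite (kspec w).1; exact: refl.
rewrite (lfp_or_lpp po x0 G1) (lfp_or_lpp po x0 G2); split => //.
Qed.

Lemma po_prod : is_poset leP.
Proof.
split; first by move=> p; split; apply: refl.
split.
  move=> [p1 p2] [q1 q2] [/= h1 h2] [/= h3 h4]; congr pair; exact: anti.
move=> p q r [h1 h2] [h3 h4]; split; [exact: trans h1 h3 | exact: trans h2 h4].
Qed.

Lemma Fp_mono f g : mono2 f -> mono2 g ->
  forall p q, leP p q -> leP (Fp f g p) (Fp f g q).
Proof. move=> mf mg p q [h1 h2]; split; [exact: mf | exact: mg]. Qed.

Lemma cpo_prod : is_CPO le -> is_CPO leP.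
Proof.
move=> cpo C Cc.
have c1 : is_chain le (fun x => exists y, C (x, y)).
  move=> x x' [y Cy] [y' Cy']; case: (Cc _ _ Cy Cy') => [[h _]|[h _]]; by [left|right].
have c2 : is_chain le (fun y => exists x, C (x, y)).
  move=> y y' [x Cx] [x' Cx']; case: (Cc _ _ Cx Cx') => [[_ h]|[_ h]]; by [left|right].
case: (cpo _ c1) => s1 [u1 l1]; case: (cpo _ c2) => s2 [u2 l2].
exists (s1, s2); split.
  move=> [x y] Cxy; split; [apply: u1; by exists y | apply: u2; by exists x].
move=> [v w] H; split => /=.
  apply: l1 => x [y Cxy]; exact: (H _ Cxy).1.
apply: l2 => y [x Cxy]; exact: (H _ Cxy).2.
Qed.

Lemma bekic_cpo f g : is_CPO le -> mono2 f -> mono2 g -> bekic_hyps f g.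
Proof.
move=> cpo mf mg; split => //.
- move=> v; apply: (lpp_cpo po) => [x y xy|]; last exact: cpo.
  apply: mg => //; exact: refl.
- move=> w; apply: (lpp_cpo po) => [x y xy|]; last exact: cpo.
  apply: mf => //; exact: refl.
- apply: lpp_cpo; [exact: po_prod | exact: Fp_mono | exact: cpo_prod].
Qed.

Definition cont2 (f : X -> X -> X) :=
  forall vn wn, is_omega_chain le vn -> is_omega_chain le wn ->
  forall v w, is_sup le (fun z => exists n, z = vn n) v ->
              is_sup le (fun z => exists n, z = wn n) w ->
  is_sup le (fun z => exists n, z = f (vn n) (wn n)) (f v w).

Lemma const_chain (w : X) : is_omega_chain le (fun _ => w).
Proof. move=> *; exact: refl. Qed.

Lemma const_sup (w : X) : is_sup le (fun z => exists n : nat, z = w) w.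
Proof.
split; first by move=> z [_ ->]; exact: refl.
move=> u H; apply: H; by exists 0.
Qed.

Lemma sup_pair (c : nat -> X * X) a b :
  is_sup le (fun z => exists n, z = (c n).1) a ->
  is_sup le (fun z => exists n, z = (c n).2) b ->
  is_sup leP (fun z => exists n, z = c n) (a, b).
Proof.
move=> [u1 l1] [u2 l2]; split.
  move=> z [n ->]; split; [apply: u1 | apply: u2]; by exists n.
move=> u H; split => /=.
  apply: l1 => z [n ->]; exact: (H (c n) (ex_intro _ n erefl)).1.
apply: l2 => z [n ->]; exact: (H (c n) (ex_intro _ n erefl)).2.
Qed.

Lemma sup_proj (c : nat -> X * X) s :
  is_sup leP (fun z => exists n, z = c n) s ->
  is_sup le (fun z => exists n, z = (c n).1) s.1 /\
  is_sup le (fun z => exists n, z = (c n).2) s.2.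
Proof.
move=> [u l]; split; split.
- move=> z [n ->]; exact: (u (c n) (ex_intro _ n erefl)).1.
- move=> v H; suff: leP s (v, s.2) by case.
  apply: l => z [n ->]; split => /=; [apply: H; by exists n| exact: (u (c n) (ex_intro _ n erefl)).2].
- move=> z [n ->]; exact: (u (c n) (ex_intro _ n erefl)).2.
- move=> v H; suff: leP s (s.1, v) by case.
  apply: l => z [n ->]; split => /=; [exact: (u (c n) (ex_intro _ n erefl)).1| apply: H; by exists n].
Qed.

Lemma bekic_omega f g : is_omegaCPO le -> mono2 f -> mono2 g -> cont2 f -> cont2 g ->
  bekic_hyps f g.
Proof.
move=> [[bot hbot] sups] mf mg cf cg; split => //.
- move=> v; apply: (lpp_kleene po (b:=bot)) => //.
  + move=> x y xy; apply: mg => //; exact: refl.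
  + move=> c ch s ss; exact: (cg _ _ (const_chain v) ch _ _ (const_sup v) ss).
- move=> w; apply: (lpp_kleene po (b:=bot)) => //.
  + move=> x y xy; apply: mf => //; exact: refl.
  + move=> c ch s ss; exact: (cf _ _ ch (const_chain w) _ _ ss (const_sup w)).
- apply: (lpp_kleene po_prod (b:=(bot,bot))).
  + exact: Fp_mono.
  + move=> y; split; exact: hbot.
  + move=> c ch.
    have ch1 : is_omega_chain le (fun n => (c n).1) by move=> i j ij; exact: (ch i j ij).1.
    have ch2 : is_omega_chain le (fun n => (c n).2) by move=> i j ij; exact: (ch i j ij).2.
    case: (sups _ ch1) => a ha; case: (sups _ ch2) => b hb.
    exists (a, b); exact: sup_pair.
  + move=> c ch s ss; case: (sup_proj ss) => s1 s2.
    have ch1 : is_omega_chain le (fun n => (c n).1) by move=> i j ij; exact: (ch i j ij).1.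
    have ch2 : is_omega_chain le (fun n => (c n).2) by move=> i j ij; exact: (ch i j ij).2.
    apply: sup_pair => /=.
      exact: (cf _ _ ch1 ch2 _ _ s1 s2).
    exact: (cg _ _ ch1 ch2 _ _ s1 s2).
Qed.

End Bekic.

Section SysLemmas.
Variables (L : choiceType) (X : Type) (le : X -> X -> Prop).
Local Open Scope fset_scope.

Definition agree (A B : {fset L}) (x : A -> X) (y : B -> X) :=
  forall j j', fsval j = fsval j' -> x j = y j'.

Lemma sys_ext (s t : system L X) : sI s = sI t -> sO s = sO t ->
  (forall (x : sI s -> X) (y : sI t -> X), agree x y ->
     forall (k : sO s) (k' : sO t), fsval k = fsval k' -> sf s x k = sf t y k') ->
  s = t.
Proof.
case: s => I O f; case: t => I' O' f' /= eI eO; subst I' O' => H.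
congr Sys; apply: functional_extensionality => x; apply: functional_extensionality => k.
apply: H => // j j' e; by rewrite (val_inj e).
Qed.

Lemma insub_fs (A : {fset L}) a (h : a \in A) : insub a = Some [` h].
Proof.
case: insubP => [u _ e|]; last by rewrite h.
congr Some; apply: val_inj => /=; exact: e.
Qed.

Lemma ext_hit (I : {fset L}) i (z : I `\ i -> X) v (j : I) : fsval j = i -> ext z v j = v.
Proof.
move=> e; rewrite /ext; case: insubP => // u; by rewrite in_fsetD1 e eqxx.
Qed.

Lemma ext_miss (I : {fset L}) i (z : I `\ i -> X) v (j : I) (h : fsval j \in I `\ i) :
  ext z v j = z [` h].
Proof. by rewrite /ext (insub_fs h). Qed.

Lemma fval_eq (A : {fset L}) (y : A -> X) (j j' : A) : fsval j = fsval j' -> y j = y j'.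
Proof. by move=> e; rewrite (val_inj e). Qed.

Lemma gamma_sf x0 (s : system L X) i o (ho : o \in sO s) x k :
  sf (gamma le x0 s i o) x k =
  sf s (ext x (lfp_or le x0 (fun w => sf s (ext x w) [` ho]))) [` memD1 (fsvalP k)].
Proof. by rewrite /gamma /= (insub_fs ho). Qed.

Lemma par_l (s1 s2 : system L X) x k (h : fsval k \in sO s1) :
  sf (par s1 s2) x k = sf s1 (resl x) [` h].
Proof.
rewrite /par /= /splitU.
move: (erefl (fsval k \in sO s1)).
Abort.

End SysLemmas.
Section T.
Variables (L : choiceType) (X : Type).
Local Open Scope fset_scope.
Lemma splitU_l (A B : {fset L}) (k : A `|` B) (h : fsval k \in A) : splitU k = inl [` h].
Proof.
rewrite /splitU.
move: (erefl (fsval k \in A)).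
generalize (fsval k \in A) at 2 3.
case=> e; last by have := e; rewrite h.
congr inl; exact: val_inj.
Qed.

Lemma splitU_r (A B : {fset L}) (k : A `|` B) (h : (fsval k \in A) = false) :
  splitU k = inr [` memU_notl (fsvalP k) h].
Proof.
rewrite /splitU.
move: (erefl (fsval k \in A)).
generalize (fsval k \in A) at 2 3.
case=> e; first by have := e; rewrite h.
congr inr; exact: val_inj.
Qed.

Lemma par_l (s1 s2 : system L X) x k (h : fsval k \in sO s1) :
  sf (par s1 s2) x k = sf s1 (resl x) [` h].
Proof. by rewrite /par /= (splitU_l h). Qed.

Lemma par_r (s1 s2 : system L X) x k (h : (fsval k \in sO s1) = false) :
  sf (par s1 s2) x k = sf s2 (resr x) [` memU_notl (fsvalP k) h].
Proof. by rewrite /par /= (splitU_r h). Qed.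

End T.
Section ParLemmas.
Variables (L : choiceType) (X : Type) (le : X -> X -> Prop).
Local Open Scope fset_scope.

Lemma disj_lam (s1 s2 : system L X) a : [disjoint lam s1 & lam s2] ->
  a \in lam s1 -> (a \in sI s2) = false /\ (a \in sO s2) = false.
Proof.
move=> /fdisjointP d h; have := d a h; rewrite /lam in_fsetU negb_or.
by case/andP => /negbTE -> /negbTE ->.
Qed.

Lemma disjOO (s1 s2 : system L X) a : [disjoint lam s1 & lam s2] ->
  a \in sO s1 -> (a \in sO s2) = false.
Proof. by move=> d h; apply: (proj2 (disj_lam d _)); rewrite /lam in_fsetU h orbT. Qed.

Lemma disjOO' (s1 s2 : system L X) a : [disjoint lam s1 & lam s2] ->
  a \in sO s2 -> (a \in sO s1) = false.
Proof.
move=> /fdisjointP d h; apply/negbTE/negP => h1.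
by move: (d a); rewrite /lam !in_fsetU h h1 !orbT => /(_ isT).
Qed.

Lemma disjII (s1 s2 : system L X) a : [disjoint lam s1 & lam s2] ->
  a \in sI s1 -> (a \in sI s2) = false.
Proof. by move=> d h; apply: (proj1 (disj_lam d _)); rewrite /lam in_fsetU h. Qed.

Lemma par_comm (s1 s2 : system L X) : [disjoint lam s1 & lam s2] -> par s1 s2 = par s2 s1.
Proof.
move=> d; apply: sys_ext; [exact: fsetUC | exact: fsetUC |].
move=> x y xy k k' e.
case h1: (fsval k \in sO s1).
- rewrite (par_l _ h1).
  have h2 : (fsval k' \in sO s2) = false.
    by rewrite -e; exact: disjOO d h1.
  rewrite (par_r _ h2); congr (sf s1 _ _); last exact: val_inj.
  apply: functional_extensionality => j; exact: xy.
- rewrite (par_r _ h1).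
  have h2 : fsval k' \in sO s2.
    have := fsvalP k'; rewrite in_fsetU -e h1 orbF; done.
  rewrite (par_l _ h2); congr (sf s2 _ _); last exact: val_inj.
  apply: functional_extensionality => j; exact: xy.
Qed.

Lemma par_assoc (s1 s2 s3 : system L X) :
  [disjoint lam s1 & lam s2] -> [disjoint lam s1 & lam s3] ->
  [disjoint lam s2 & lam s3] ->
  par (par s1 s2) s3 = par s1 (par s2 s3).
Proof.
move=> d12 d13 d23; apply: sys_ext; [by rewrite /= fsetUA | by rewrite /= fsetUA |].
move=> x y xy k k' e.
case h1: (fsval k \in sO s1).
- have h12 : fsval k \in sO s1 `|` sO s2 by rewrite in_fsetU h1.
  rewrite (par_l _ h12) (par_l (k := [` h12]) _ h1).
  have h1' : fsval k' \in sO s1 by rewrite -e.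
  rewrite (par_l _ h1'); congr (sf s1 _ _); last exact: val_inj.
  apply: functional_extensionality => j; exact: xy.
case h2: (fsval k \in sO s2).
- have h12 : fsval k \in sO s1 `|` sO s2 by rewrite in_fsetU h2 orbT.
  rewrite (par_l _ h12) (par_r (k := [` h12]) _ h1).
  have h1' : (fsval k' \in sO s1) = false by rewrite -e.
  rewrite (par_r _ h1').
  have h2' : fsval k' \in sO s2 by rewrite -e.
  rewrite (par_l (k := [` memU_notl (fsvalP k') h1']) _ h2'); congr (sf s2 _ _); last exact: val_inj.
  apply: functional_extensionality => j; exact: xy.
- have h12 : (fsval k \in sO s1 `|` sO s2) = false by rewrite in_fsetU h1 h2.
  rewrite (par_r _ h12).
  have h1' : (fsval k' \in sO s1) = false by rewrite -e.
  rewrite (par_r _ h1').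
  have h2' : (fsval k' \in sO s2) = false by rewrite -e.
  rewrite (par_r (k := [` memU_notl (fsvalP k') h1']) _ h2'); congr (sf s3 _ _); last exact: val_inj.
  apply: functional_extensionality => j; exact: xy.
Qed.

Lemma par_gamma x0 (s1 s2 : system L X) i o : [disjoint lam s1 & lam s2] ->
  inGamma s1 i o -> par (gamma le x0 s1 i o) s2 = gamma le x0 (par s1 s2) i o.
Proof.
move=> d [hi ho].
have hi2 := disjII d hi.
have ho2 := disjOO d ho.
apply: sys_ext.
- apply/fsetP => z; rewrite !(in_fsetU, in_fsetD1).
  by case: (eqVneq z i) => [->|] /=; rewrite ?hi2.
- apply/fsetP => z; rewrite !(in_fsetU, in_fsetD1).
  by case: (eqVneq z o) => [->|] /=; rewrite ?ho2.
move=> x y xy k k' e.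
have ho' : o \in sO (par s1 s2) by rewrite /= in_fsetU ho.
rewrite (gamma_sf ho').
case h1: (fsval k \in sO s1 `\ o).
- rewrite (par_l _ h1) (gamma_sf ho).
  have hk1 : fsval k' \in sO s1 by move: h1; rewrite e in_fsetD1 => /andP[].
  rewrite (par_l (k := [` memD1 (fsvalP k')]) _ hk1).
  have KE : forall w, resl (ext y w) = ext (resl x) w.
    move=> w; apply: functional_extensionality => j.
    case: (eqVneq (fsval j) i) => hj; first by rewrite /resl !ext_hit...
    have hj1 : fsval j \in sI s1 `\ i by rewrite in_fsetD1 hj fsvalP.
    have hj2 : fsval j \in (sI s1 `|` sI s2) `\ i by rewrite in_fsetD1 hj in_fsetU fsvalP.
    rewrite (ext_miss _ _ hj1) /resl (ext_miss (j := [` memUl (sI s2) (fsvalP j)]) _ _ hj2); symmetry; exact: xy.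
  have -> : (fun w => sf (par s1 s2) (ext y w) [` ho']) =
            (fun w => sf s1 (ext (resl x) w) [` ho]).
    apply: functional_extensionality => w; by rewrite (par_l (k := [` ho']) _ ho) KE.
  rewrite KE; congr (sf s1 _ _); exact: val_inj.
- rewrite (par_r _ h1).
  have hk2 : fsval k' \in sO s2.
    have := fsvalP k; rewrite in_fsetU h1 /= => hk; by rewrite -e.
  have hk1 : (fsval k' \in sO s1) = false.
    exact: disjOO' d hk2.
  rewrite (par_r (k := [` memD1 (fsvalP k')]) _ hk1).
  congr (sf s2 _ _); last exact: val_inj.
  apply: functional_extensionality => j.
  have hj : fsval j != i by apply/eqP => ej; move: (fsvalP j); rewrite ej hi2.
  have hj2 : fsval j \in (sI s1 `|` sI s2) `\ i by rewrite in_fsetD1 hj in_fsetU fsvalP orbT.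
  rewrite /resr (ext_miss (j := [` memUr (sI s1) (fsvalP j)]) _ _ hj2); exact: xy.
Qed.

End ParLemmas.
Section GammaComm.
Variables (L : choiceType) (X : Type) (le : X -> X -> Prop).
Local Open Scope fset_scope.

Definition tc (I : {fset L}) (E : X -> X -> I -> X) :=
  forall j, [\/ forall v w, E v w j = v, forall v w, E v w j = w |
                exists c, forall v w, E v w j = c].

Definition good (s : system L X) :=
  forall E : X -> X -> sI s -> X, tc E -> forall k1 k2 : sO s,
    bekic_hyps le (fun v w => sf s (E v w) k1) (fun v w => sf s (E v w) k2).

Lemma gamma_comm x0 (s : system L X) i o i' o' : is_poset le -> good s ->
  inGamma s i o -> inGamma (gamma le x0 s i o) i' o' ->
  [/\ inGamma s i' o', inGamma (gamma le x0 s i' o') i o &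
      gamma le x0 (gamma le x0 s i o) i' o' = gamma le x0 (gamma le x0 s i' o') i o].
Proof.
move=> po G [hi ho] [/= hi' ho'].
have hi'I : i' \in sI s := memD1 hi'.
have ho'O : o' \in sO s := memD1 ho'.
have ne : i' != i by move: hi'; rewrite in_fsetD1 => /andP[].
have neo : o' != o by move: ho'; rewrite in_fsetD1 => /andP[].
have hi2 : i \in sI s `\ i' by rewrite in_fsetD1 eq_sym ne hi.
have ho2 : o \in sO s `\ o' by rewrite in_fsetD1 eq_sym neo ho.
split => //.
apply: sys_ext.
- apply/fsetP => z /=; rewrite !in_fsetD1.
  by case: (z != i); case: (z != i').
- apply/fsetP => z /=; rewrite !in_fsetD1.
  by case: (z != o); case: (z != o').
move=> x y xy k k' e.
pose E v w : sI s -> X := ext (ext x v) w.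
pose f v w := sf s (E v w) [` ho'O].
pose g v w := sf s (E v w) [` ho].
have tcE : tc E.
  move=> j; case: (eqVneq (fsval j) i) => hj.
    by apply: Or32 => v w; rewrite /E ext_hit.
  have hj1 : fsval j \in sI s `\ i by rewrite in_fsetD1 hj fsvalP.
  case: (eqVneq (fsval j) i') => hj'.
    by apply: Or31 => v w; rewrite /E (ext_miss _ _ hj1) ext_hit.
  have hj2 : fsval j \in (sI s `\ i) `\ i' by rewrite in_fsetD1 hj' hj1.
  apply: Or33; exists (x [` hj2]) => v w.
  by rewrite /E (ext_miss _ _ hj1) (ext_miss (j := [` hj1]) _ _ hj2).
have EE : forall v w, ext (ext y w) v = E v w.
  move=> v w; apply: functional_extensionality => j.
  case: (eqVneq (fsval j) i) => hj.
    have hj1 : fsval j \in sI s `\ i' by rewrite in_fsetD1 hj eq_sym ne hi.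
    by rewrite /E (ext_miss _ _ hj1) !ext_hit.
  have hj1 : fsval j \in sI s `\ i by rewrite in_fsetD1 hj fsvalP.
  case: (eqVneq (fsval j) i') => hj'.
    by rewrite /E (ext_miss _ _ hj1) !ext_hit.
  have hj2 : fsval j \in (sI s `\ i) `\ i' by rewrite in_fsetD1 hj' hj1.
  have hj1' : fsval j \in sI s `\ i' by rewrite in_fsetD1 hj' fsvalP.
  have hj2' : fsval j \in (sI s `\ i') `\ i by rewrite in_fsetD1 hj hj1'.
  rewrite /E (ext_miss _ _ hj1) (ext_miss (j := [` hj1]) _ _ hj2).
  rewrite (ext_miss _ _ hj1') (ext_miss (j := [` hj1']) _ _ hj2').
  symmetry; exact: xy.
have [B1 B2] := bekic po x0 (G E tcE [` ho'O] [` ho]).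
rewrite -/f -/g in B1 B2.
have kO : fsval k \in sO s by apply: memD1 (memD1 (fsvalP k)).
set h := fun v => lfp_or le x0 (g v).
set kk := fun w => lfp_or le x0 (fun v => f v w).
have LHS : sf (gamma le x0 (gamma le x0 s i o) i' o') x k =
           sf s (E (lfp_or le x0 (fun v => f v (h v))) (h (lfp_or le x0 (fun v => f v (h v))))) [` kO].
  rewrite (gamma_sf (s := gamma le x0 s i o) ho') (gamma_sf ho).
  have -> : (fun v => sf (gamma le x0 s i o) (ext x v) [` ho']) = (fun v => f v (h v)).
    apply: functional_extensionality => v; rewrite (gamma_sf ho).
    rewrite /f /h /g /E; congr (sf s _ _); exact: val_inj.
  rewrite /E /h /g /E; congr (sf s _ _); exact: val_inj.
have RHS : sf (gamma le x0 (gamma le x0 s i' o') i o) y k' =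
           sf s (E (kk (lfp_or le x0 (fun w => g (kk w) w))) (lfp_or le x0 (fun w => g (kk w) w))) [` kO].
  rewrite (gamma_sf (s := gamma le x0 s i' o') ho2) (gamma_sf ho'O).
  have -> : (fun w => sf (gamma le x0 s i' o') (ext y w) [` ho2]) = (fun w => g (kk w) w).
    apply: functional_extensionality => w; rewrite (gamma_sf ho'O).
    have -> : (fun v => sf s (ext (ext y w) v) [` ho'O]) = (fun v => f v w).
      apply: functional_extensionality => v; by rewrite EE.
    rewrite EE /g /kk; congr (sf s _ _); exact: val_inj.
  have -> : (fun v => sf s (ext (ext y (lfp_or le x0 (fun w => g (kk w) w))) v) [` ho'O]) =
            (fun v => f v (lfp_or le x0 (fun w => g (kk w) w))).
    apply: functional_extensionality => v; by rewrite EE.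
  rewrite EE; congr (sf s _ _); apply: val_inj => /=; by rewrite e.
rewrite LHS RHS /h /kk /=.
rewrite B2. rewrite B1. by [].
Qed.

End GammaComm.
Section Good.
Variables (L : choiceType) (X : Type) (le : X -> X -> Prop).
Hypothesis po : is_poset le.
Local Open Scope fset_scope.

Let refl : forall x, le x x := proj1 po.
Let anti : forall x y, le x y -> le y x -> x = y := proj1 (proj2 po).
Let trans : forall x y z, le x y -> le y z -> le x z := proj2 (proj2 po).

Lemma tc_mono (I : {fset L}) (E : X -> X -> I -> X) : tc E ->
  forall v v' w w', le v v' -> le w w' -> lef le (E v w) (E v' w').
Proof.
move=> T v v' w w' hv hw j; case: (T j) => [h|h|[c h]]; rewrite !h //; exact: refl.
Qed.

Lemma good_mono (s : system L X) : is_CPO le -> monotone_fun le (sf s) -> good le s.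
Proof.
move=> cpo M E T k1 k2; apply: bekic_cpo => //;
  move=> v v' w w' hv hw; apply: M; exact: tc_mono.
Qed.

Lemma cont_mono (A B : Type) (F : (A -> X) -> (B -> X)) :
  omega_continuous_fun le F -> monotone_fun le F.
Proof.
move=> C x y xy.
pose c n := if n is 0 then x else y.
have ch : is_omega_chain (lef le) c.
  move=> [|i] [|j] //= _ a; by [apply: refl | apply: xy].
have sup : is_sup (lef le) (fun z => exists n, z = c n) y.
  split; first by move=> z [[|n] ->] a /=; [exact: xy | exact: refl].
  move=> u H; apply: H; by exists 1.
have [H _] := C c ch y sup.
apply: H; by exists 0.
Qed.

Lemma sup_eval (O : {fset L}) (G : nat -> O -> X) S :
  is_sup (lef le) (fun z => exists n, z = G n) S ->
  forall k, is_sup le (fun z => exists n, z = G n k) (S k).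
Proof.
move=> [u l] k; split.
  move=> z [n ->]; exact: (u (G n) (ex_intro _ n erefl) k).
move=> b H.
pose S' := fun j => if j == k then b else S j.
have : lef le S S'.
  apply: l => z [n ->] j; rewrite /S'; case: eqP => [->|_].
    apply: H; by exists n.
  exact: (u (G n) (ex_intro _ n erefl) j).
by move=> /(_ k); rewrite /S' eqxx.
Qed.

Lemma good_cont (s : system L X) : is_omegaCPO le -> omega_continuous_fun le (sf s) ->
  good le s.
Proof.
move=> ocpo C E T k1 k2.
have M := cont_mono C.
have m2 : forall k, mono2 le (fun v w => sf s (E v w) k).
  move=> k v v' w w' hv hw; apply: M; exact: tc_mono.
have c2 : forall k, cont2 le (fun v w => sf s (E v w) k).
  move=> k vn wn chv chw v w [uv lv] [uw lw].
  pose c n := E (vn n) (wn n).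
  have ch : is_omega_chain (lef le) c.
    move=> i j ij; apply: tc_mono => //; [exact: chv | exact: chw].
  have sup : is_sup (lef le) (fun z => exists n, z = c n) (E v w).
    split.
      move=> z [n ->] j; rewrite /c; case: (T j) => [h|h|[c0 h]]; rewrite !h.
      - apply: uv; by exists n.
      - apply: uw; by exists n.
      - exact: refl.
    move=> u H j; case: (T j) => [h|h|[c0 h]]; rewrite h.
    - apply: lv => z [n ->]; have := H (c n) (ex_intro _ n erefl) j; by rewrite /c h.
    - apply: lw => z [n ->]; have := H (c n) (ex_intro _ n erefl) j; by rewrite /c h.
    - have := H (c 0) (ex_intro _ 0 erefl) j; by rewrite /c h.
  exact: (sup_eval (C c ch _ sup) k).
by apply: bekic_omega.
Qed.

End Good.

Theorem theorem5p8 (L : choiceType) (X : Type) (le : X -> X -> Prop) :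
  is_poset le -> nonempty_chain_inf le ->
  (is_CPO le ->
     forall x0 : X, composition_order_invariant le x0 (@monotone_sys L X le)) /\
  (is_omegaCPO le ->
     forall x0 : X, composition_order_invariant le x0 (@continuous_sys L X le)).
Proof.
move=> po _; split => [cpo|ocpo] x0; split.
- move=> s [_ Ms] i o i' o' g1 g2; apply: gamma_comm => //; exact: good_mono.
- split; first by move=> s1 s2 _ _ d; exact: par_comm.
  split; first by move=> s1 s2 s3 _ _ _ d12 d13 d23; exact: par_assoc.
  move=> s1 s2 i o _ _ d g; exact: par_gamma.
- move=> s [_ Ms] i o i' o' g1 g2; apply: gamma_comm => //; exact: good_cont.
- split; first by move=> s1 s2 _ _ d; exact: par_comm.
  split; first by move=> s1 s2 s3 _ _ _ d12 d13 d23; exact: par_assoc.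
  move=> s1 s2 i o _ _ d g; exact: par_gamma.
Qed.
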